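(* For every integer $n\ge 0$ the following identities hold: (i) $\displaystyle\sum_{i=0}^{n}B_i(t)\,U_{n-i}\!\left(-\tfrac{t}{2}\right)=\begin{cases}0 & \text{if } n \text{ is even},\\ B_{\frac{n+1}{2}}(t) & \text{if } n \text{ is odd};\end{cases}$ (ii) $\displaystyle\sum_{i=0}^{n}B_i(t)B_{n-i}(-t)=\begin{cases}B_{\frac{n}{2}}(2-t^{2}) & \text{if } n \text{ is even},\\ 0 & \text{if } n \text{ is odd};\end{cases}$ (iii) as an identity of rational functions of $t$, $$\frac{t^{2}}{t^{4}-1}\sum_{i=0}^{n}\left(t^{2i}-\frac{1}{t^{2i}}\right)B_{n-i}\!\left(-t^{2}-\frac{1}{t^{2}}\right)=\begin{cases}B_{\frac{n}{2}}\!\left(-t^{2}-\frac{1}{t^{2}}\right) & \text{if } n \text{ is even},\\ 0 & \text{if } n \text{ is odd}.\end{cases}$$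
   Context: The Stern polynomials $B_n(t)\in\mathbb{Z}[t]$, $n\ge 0$, are defined by $B_0(t)=0$, $B_1(t)=1$, $B_{2n}(t)=tB_n(t)$ and $B_{2n+1}(t)=B_n(t)+B_{n+1}(t)$ for $n\ge 1$. $U_n(t)$ denotes the Chebyshev polynomial of the second kind, determined by $\frac{1}{1-2tx+x^{2}}=\sum_{n\ge 0}U_n(t)x^{n}$. *)

(* Defs.v *)
From HB Require Import structures.
From mathcomp Require Import all_boot all_order all_algebra fraction.
Set Implicit Arguments. Unset Strict Implicit. Unset Printing Implicit Defensive.
Import Order.TTheory GRing.Theory Num.Theory.
Local Open Scope ring_scope.

(* Stern polynomials B_n over an arbitrary ring R:
   B_0 = 0, B_1 = 1, B_{2m} = t B_m, B_{2m+1} = B_m + B_{m+1} (m >= 1).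
   Defined with fuel; stern n uses fuel n, which suffices. *)
Fixpoint stern_fuel (R : nzRingType) (k n : nat) : {poly R} :=
  match k with
  | 0%N => 0
  | k'.+1 =>
    if n == 0%N then 0
    else if n == 1%N then 1
    else if odd n then stern_fuel R k' n./2 + stern_fuel R k' (n./2).+1
    else 'X * stern_fuel R k' n./2
  end.

Definition stern (R : nzRingType) (n : nat) : {poly R} := stern_fuel R n n.

(* Chebyshev polynomials of the second kind:
   U_0 = 1, U_1 = 2t, U_{n+2} = 2t U_{n+1} - U_n
   (equivalent to 1/(1 - 2tx + x^2) = sum U_n(t) x^n). *)
Fixpoint chebU_pair (R : nzRingType) (n : nat) : {poly R} * {poly R} :=
  match n with
  | 0%N => (1, 'X *+ 2)
  | m.+1 => let: (a, b) := chebU_pair R m in (b, 'X *+ 2 * b - a)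
  end.

Definition chebU (R : nzRingType) (n : nat) : {poly R} := (chebU_pair R n).1.

Definition ratfun := {fraction {poly rat}}.
Definition tvar : ratfun := @FracField.tofrac {poly rat} 'X.

(* Main.v *)
Require Import Defs.
From HB Require Import structures.
From mathcomp Require Import all_boot all_order all_algebra fraction.
From Stdlib Require Import Lia.
Import Order.TTheory GRing.Theory Num.Theory.
Local Open Scope ring_scope.


Lemma half_facts n : exists h, n = (odd n + (h + h))%N /\ n./2 = h.
Proof. exists n./2; split => //; by rewrite addnn odd_double_half. Qed.

Lemma stern_fuel_eq (R : nzRingType) k1 k2 n :
  (n <= k1)%N -> (n <= k2)%N -> stern_fuel R k1 n = stern_fuel R k2 n.
Proof.
elim: k1 k2 n => [|k1 IH] [|k2] n /=.
- by [].
- by rewrite leqn0 => /eqP -> _.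
- by move=> _; rewrite leqn0 => /eqP ->.
move=> /ssrnat.leP h1 /ssrnat.leP h2.
case: (n =P 0%N) => // n0; case: (n =P 1%N) => // n1.
have [h [E ->]] := half_facts n.
case: ifP => on; rewrite on /= -!plusE in E.
  by congr (_ + _); apply: IH; apply/ssrnat.leP; lia.
by congr (_ * _); apply: IH; apply/ssrnat.leP; lia.
Qed.

Lemma stern0 (R : nzRingType) : stern R 0 = 0. Proof. by []. Qed.
Lemma stern1 (R : nzRingType) : stern R 1 = 1. Proof. by []. Qed.

Lemma stern_fuelS (R : nzRingType) k n : stern_fuel R k.+1 n =
  if n == 0%N then 0 else if n == 1%N then 1
  else if odd n then stern_fuel R k n./2 + stern_fuel R k (n./2).+1
  else 'X * stern_fuel R k n./2.
Proof. by []. Qed.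

Lemma sternE (R : nzRingType) n : (2 <= n)%N -> stern R n =
  if odd n then stern R n./2 + stern R (n./2).+1 else 'X * stern R n./2.
Proof.
case: n => [|k] // k1; rewrite /stern stern_fuelS.
case: (k.+1 =P 0%N) => // _; case: (k.+1 =P 1%N) => [e|_]; first by rewrite e in k1.
have [h [E ->]] := half_facts k.+1.
move/ssrnat.leP: k1 => k1.
case: ifP => on; rewrite on /= -!plusE in E.
  by congr (_ + _); apply: stern_fuel_eq; apply/ssrnat.leP; lia.
by congr (_ * _); apply: stern_fuel_eq; apply/ssrnat.leP; lia.
Qed.

Lemma stern_even (R : nzRingType) a : stern R (a.*2) = 'X * stern R a.
Proof.
case: a => [|a]; first by rewrite /= mulr0.
by rewrite sternE ?odd_double ?doubleK // doubleS.
Qed.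

Lemma stern_odd (R : nzRingType) a : stern R (a.*2.+1) = stern R a + stern R a.+1.
Proof.
case: a => [|a]; first by rewrite stern0 add0r.
by rewrite sternE /= ?odd_double ?uphalf_double // doubleS.
Qed.



Definition conv (R : nzRingType) (f g : nat -> R) n := \sum_(i < n.+1) f i * g (n - i)%N.
Arguments conv {R}.

Lemma conv_rec (R : comNzRingType) (f u : nat -> R) a b :
  (forall k, u k.+2 = a * u k.+1 + b * u k) -> forall n,
  conv f u n.+2 = f n.+2 * u 0%N + f n.+1 * (u 1%N - a * u 0%N) + a * conv f u n.+1 + b * conv f u n.
Proof.
move=> hu n; rewrite /conv big_ord_recr big_ord_recr /= subnn subSnn.
rewrite [in RHS](big_ord_recr n.+1) /= subnn.
have -> : \sum_(i < n.+1) f i * u (n.+2 - i)%N =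
   a * \sum_(i < n.+1) f i * u (n.+1 - i)%N + b * \sum_(i < n.+1) f i * u (n - i)%N.
  rewrite !big_distrr -big_split /=; apply: eq_bigr => i _.
  have hi : (i <= n)%N by rewrite -ltnS.
  rewrite subSn; last by rewrite ltnW.
  rewrite subSn // hu.
  by rewrite mulrDr [f i * (a * _)]mulrCA [f i * (b * _)]mulrCA.
rewrite mulrBr mulrDr [a * (f _ * _)]mulrCA.
move: (a * _) (b * _) (f n.+1 * u 1%N) (f n.+2 * u 0%N) (f n.+1 * (a * u 0%N)) => X Y P Q Z.
rewrite (addrC X Z) !addrA subrK.

by rewrite -[LHS]addrA -[RHS]addrA [RHS]addrC (addrC Q P).
Qed.


Arguments conv_rec {R}.
Lemma convC (R : comNzRingType) (f g : nat -> R) n : conv f g n = conv g f n.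
Proof.
rewrite /conv (reindex_inj rev_ord_inj); apply: eq_bigr => i _.
rewrite [nat_of_ord (rev_ord i)]/= subSS subKn; first by rewrite mulrC.
by rewrite -ltnS.
Qed.

Lemma conv0 (R : nzRingType) (f g : nat -> R) : conv f g 0 = f 0%N * g 0%N.
Proof. by rewrite /conv big_ord1. Qed.

Lemma conv1 (R : nzRingType) (f g : nat -> R) : conv f g 1 = f 0%N * g 1%N + f 1%N * g 0%N.
Proof. by rewrite /conv big_ord_recr big_ord1. Qed.

Section Gen.
Variable R : comNzRingType.
Variables (f : nat -> R) (c : R).
Hypothesis f0 : f 0%N = 0.
Hypothesis fe : forall a, f a.*2 = c * f a.
Hypothesis fo : forall a, f a.*2.+1 = f a + f a.+1.

Lemma conv_U (u : nat -> R) : u 0%N = 1 -> u 1%N = - c ->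
  (forall k, u k.+2 = - c * u k.+1 + (-1) * u k) ->
  forall m, conv f u m.*2 = 0 /\ conv f u m.*2.+1 = f m.+1.
Proof.
move=> u0 u1 hu; elim=> [|m [IH1 IH2]].
  by rewrite conv0 conv1 f0 u0 !mul0r add0r mulr1.
have e1 : conv f u m.+1.*2 = 0.
  rewrite doubleS (conv_rec f u _ _ hu) IH1 IH2 u0 u1 -doubleS fe.
  by rewrite !mulr1 subrr !mulr0 !addr0 mulNr addrN.
split => //.
rewrite doubleS (conv_rec f u _ _ hu) -doubleS e1 IH2 u0 u1 fo.
by rewrite !mulr1 subrr !mulr0 !addr0 mulN1r (addrC (f m.+1)) addrK.
Qed.

Lemma conv_V (u : nat -> R) : u 0%N = 0 -> u 1%N = 1 ->
  (forall k, u k.+2 = - c * u k.+1 + (-1) * u k) ->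
  forall m, conv f u m.*2 = f m /\ conv f u m.*2.+1 = 0.
Proof.
move=> u0 u1 hu; elim=> [|m [IH1 IH2]].
  by rewrite conv0 conv1 f0 u0 !mul0r add0r mulr0.
have e1 : conv f u m.+1.*2 = f m.+1.
  rewrite doubleS (conv_rec f u _ _ hu) IH1 IH2 u0 u1 -doubleS fo.
  by rewrite !mulr0 subr0 mulr1 add0r addr0 mulN1r addrC addKr.
split => //.
rewrite doubleS (conv_rec f u _ _ hu) -doubleS e1 IH2 u0 u1 fe.
by rewrite !mulr0 subr0 mulr1 add0r addr0 mulNr addrN.
Qed.
End Gen.



Ltac nlia := rewrite -?addnn -?plusE -?minusE; lia.

Lemma sum_split (R : nzRingType) (h : nat -> R) m :
  \sum_(i < m.*2) h i = \sum_(a < m) h a.*2 + \sum_(a < m) h a.*2.+1.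
Proof.
elim: m => [|m IH]; first by rewrite !big_ord0 addr0.
rewrite doubleS !big_ord_recr /= IH -!addrA; congr (_ + _).
by rewrite addrCA.
Qed.

Section Gen2.
Variable R : comNzRingType.
Variables (f g : nat -> R) (c : R).
Hypothesis f0 : f 0%N = 0.
Hypothesis g0 : g 0%N = 0.
Hypothesis fe : forall a, f a.*2 = c * f a.
Hypothesis fo : forall a, f a.*2.+1 = f a + f a.+1.
Hypothesis ge : forall a, g a.*2 = - c * g a.
Hypothesis go : forall a, g a.*2.+1 = g a + g a.+1.

Lemma L1 m : \sum_(a < m.+1) f a * g (m.+1 - a)%N = conv f g m.+1.
Proof. by rewrite /conv [RHS]big_ord_recr /= subnn g0 mulr0 addr0. Qed.

Lemma L2 m : \sum_(a < m.+1) f a.+1 * g (m - a)%N = conv f g m.+1.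
Proof. rewrite /conv [RHS]big_ord_recl /= f0 mul0r add0r. apply: eq_bigr => i _. by rewrite subSS. Qed.

Lemma L3 m : \sum_(a < m.+1) f a.+1 * g (m.+1 - a)%N = conv f g m.+2.
Proof.
rewrite /conv [RHS]big_ord_recl /= f0 mul0r add0r [RHS]big_ord_recr /= subnn g0 mulr0 addr0.
by apply: eq_bigr => i _; rewrite subSS.
Qed.

Lemma conv_odd m : conv f g m.*2.+1 = 0.
Proof.
rewrite /conv -doubleS (sum_split _ (fun i => f i * g (m.*2.+1 - i)%N)).
have -> : \sum_(a < m.+1) f a.*2 * g (m.*2.+1 - a.*2)%N =
   c * \sum_(a < m.+1) f a * g (m - a)%N + c * \sum_(a < m.+1) f a * g (m.+1 - a)%N.
  rewrite !big_distrr -big_split; apply: eq_bigr => a _ /=.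
  have ha : (a <= m)%N by rewrite -ltnS.
  rewrite (_ : (m.*2.+1 - a.*2 = (m-a).*2.+1)%N); last by move/ssrnat.leP: ha; nlia.
  by rewrite fe go -subSn // -mulrA !mulrDr.
have -> : \sum_(a < m.+1) f a.*2.+1 * g (m.*2.+1 - a.*2.+1)%N =
   - (c * \sum_(a < m.+1) f a * g (m - a)%N) - c * \sum_(a < m.+1) f a.+1 * g (m - a)%N.
  rewrite !big_distrr -!sumrN -big_split; apply: eq_bigr => a _ /=.
  have ha : (a <= m)%N by rewrite -ltnS.
  rewrite (_ : (m.*2.+1 - a.*2.+1 = (m-a).*2)%N); last by move/ssrnat.leP: ha; nlia.
  by rewrite fo ge mulrDl [f a * _]mulrCA [f a.+1 * _]mulrCA !mulNr.
by rewrite L1 L2 addrACA !subrr addr0.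
Qed.
Lemma conv_even m : conv f g m.+1.*2 =
  conv f g m + conv f g m.+1 + conv f g m.+1 + conv f g m.+2 - c * c * conv f g m.+1.
Proof.
rewrite {1}/conv doubleS big_ord_recr /= subnn g0 mulr0 addr0.
rewrite -doubleS (sum_split _ (fun i => f i * g (m.*2.+2 - i)%N)).
have -> : \sum_(a < m.+1) f a.*2 * g (m.*2.+2 - a.*2)%N =
   - (c * c * \sum_(a < m.+1) f a * g (m.+1 - a)%N).
  rewrite big_distrr -sumrN; apply: eq_bigr => a _ /=.
  have ha : (a <= m)%N by rewrite -ltnS.
  rewrite (_ : (m.*2.+2 - a.*2 = (m.+1-a).*2)%N); last by move/ssrnat.leP: ha; nlia.
  rewrite fe ge mulNr mulrN; congr (- _); rewrite -!mulrA; congr (c * _); by rewrite mulrCA.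
have -> : \sum_(a < m.+1) f a.*2.+1 * g (m.*2.+2 - a.*2.+1)%N =
   (\sum_(a < m.+1) f a * g (m - a)%N + \sum_(a < m.+1) f a * g (m.+1 - a)%N) +
   (\sum_(a < m.+1) f a.+1 * g (m - a)%N + \sum_(a < m.+1) f a.+1 * g (m.+1 - a)%N).
  rewrite -!big_split; apply: eq_bigr => a _ /=.
  have ha : (a <= m)%N by rewrite -ltnS.
  rewrite (_ : (m.*2.+2 - a.*2.+1 = (m-a).*2.+1)%N); last by move/ssrnat.leP: ha; nlia.
  by rewrite fo go -subSn // mulrDl !mulrDr.
rewrite L1 L2 L3 (_ : \sum_(a < m.+1) f a * g (m - a)%N = conv f g m) //.
by rewrite addrC !addrA.
Qed.

Variables (h : nat -> R) (d : R).
Hypothesis f1 : f 1%N = 1.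
Hypothesis g1 : g 1%N = 1.
Hypothesis h0 : h 0%N = 0.
Hypothesis h1 : h 1%N = 1.
Hypothesis he : forall a, h a.*2 = d * h a.
Hypothesis ho : forall a, h a.*2.+1 = h a + h a.+1.
Hypothesis hd : d = 1 + 1 - c * c.

Definition T j := if odd j then 0 else h j./2.

Lemma T_rec m : T m + T m.+2 + d * T m.+1 = h m.+1.
Proof.
rewrite /T; have := odd_double_half m; move: (odd m) (m./2) => b k <-.
case: b; rewrite ?add1n ?add0n /= !odd_double /= ?uphalf_double ?doubleK.
  by rewrite !add0r -doubleS he.
by rewrite mulr0 addr0 ho.
Qed.

Theorem conv_II n : conv f g n = T n.
Proof.
elim/ltn_ind: n => n IH.
have := odd_double_half n; move: (odd n) (n./2) => b k E; rewrite -E.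
case: b E => /= E; first by rewrite add1n conv_odd /T /= odd_double.
rewrite add0n /T odd_double doubleK.
case: k E => [|[|k]] E.
- by rewrite conv0 f0 mul0r h0.
- by rewrite /conv !big_ord_recr big_ord0 /= f0 g0 f1 g1 !mul0r !mulr0 !add0r mulr1 addr0.
rewrite conv_even !IH; try by rewrite -E; apply/ssrnat.ltP; nlia.
rewrite -(T_rec k.+1) hd mulrBl mulrDl !mul1r.
move: (T k.+1) (T k.+2) (T k.+3) (c * c * T k.+2) => X Y Z W.
rewrite !addrA; congr (_ - _).
by rewrite [X + Y + Y + Z]addrAC [X + Y + Z]addrAC.
Qed.
End Gen2.



Lemma chebU_rec (R : nzRingType) k :
  chebU R k.+2 = 'X *+ 2 * chebU R k.+1 - chebU R k.
Proof. by rewrite /chebU /=; case: (chebU_pair R k). Qed.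

Lemma chebU1 (R : nzRingType) : chebU R 1 = 'X *+ 2.
Proof. by []. Qed.

Lemma half_rat : (- (2^-1 : rat)) *+ 2 = -1.
Proof. by apply/eqP. Qed.

Lemma part1 n :
   \sum_(i < n.+1) stern rat i * (chebU rat (n - i) \Po (- (2^-1 : rat) *: 'X))
     = (if odd n then stern rat (n.+1)./2 else 0).
Proof.
set q := (- (2^-1 : rat) *: 'X).
have hq : q *+ 2 = - 'X by rewrite /q scalerMnl half_rat scaleN1r.
pose u k := chebU rat k \Po q.
have u0 : u 0%N = 1 by rewrite /u /chebU /= comp_polyC.
have u1 : u 1%N = - 'X by rewrite /u chebU1 mulr2n comp_polyD comp_polyX -mulr2n.
have hu : forall k, u k.+2 = - 'X * u k.+1 + (-1) * u k.
  by move=> k; rewrite /u chebU_rec comp_polyB comp_polyM mulr2n comp_polyD comp_polyX -mulr2n hq mulN1r.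
have H := conv_U _ _ _ (stern0 rat) (stern_even rat) (stern_odd rat) _ u0 u1 hu.
have -> : \sum_(i < n.+1) stern rat i * (chebU rat (n - i) \Po q) = conv (stern rat) u n by [].
have := odd_double_half n; move: (odd n) (n./2) => b k <-.
case: b; rewrite ?add1n ?add0n /= ?odd_double /=.
  by case: (H k) => _ ->; rewrite doubleK.
by case: (H k).
Qed.

Lemma part2 n :
   \sum_(i < n.+1) stern rat i * (stern rat (n - i) \Po (- 'X))
     = (if odd n then 0 else stern rat n./2 \Po (2%:P - 'X ^+ 2)).
Proof.
pose g k := stern rat k \Po (- 'X).
pose h k := stern rat k \Po (2%:P - 'X ^+ 2).
have g0 : g 0%N = 0 by rewrite /g stern0 comp_poly0.
have g1 : g 1%N = 1 by rewrite /g stern1 comp_polyC.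
have h0 : h 0%N = 0 by rewrite /h stern0 comp_poly0.
have h1 : h 1%N = 1 by rewrite /h stern1 comp_polyC.
have ge : forall a, g a.*2 = - 'X * g a.
  by move=> a; rewrite /g stern_even comp_polyM comp_polyX.
have go : forall a, g a.*2.+1 = g a + g a.+1.
  by move=> a; rewrite /g stern_odd comp_polyD.
have he : forall a, h a.*2 = (2%:P - 'X ^+ 2) * h a.
  by move=> a; rewrite /h stern_even comp_polyM comp_polyX.
have ho : forall a, h a.*2.+1 = h a + h a.+1.
  by move=> a; rewrite /h stern_odd comp_polyD.
have hd : (2%:P - 'X ^+ 2 : {poly rat}) = 1 + 1 - 'X * 'X.
  by rewrite expr2 polyC_natr mulr2n.
have H := conv_II _ _ _ _ (stern0 rat) g0 (stern_even rat) (stern_odd rat) ge go _ _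
   (stern1 rat) g1 h0 h1 he ho hd n.
exact: H.
Qed.

Lemma w_rec (R : comNzRingType) (y z : R) k : y * z = 1 ->
  y ^+ k.+2 - z ^+ k.+2 = (y + z) * (y ^+ k.+1 - z ^+ k.+1) - (y ^+ k - z ^+ k).
Proof.
move=> yz; rewrite !exprS mulrDl !mulrBr.
rewrite [y * (z * _)]mulrA yz mul1r [z * (y * _)]mulrA [z * y]mulrC yz mul1r.
move: (y * (y * y ^+ k)) (z * (z * z ^+ k)) (y ^+ k) (z ^+ k) => A B Y Z.
by rewrite opprB !addrA [RHS]addrAC [_ - _ - Y]addrAC addrK [_ - _ + Z]addrAC subrK.
Qed.

Lemma tvar_neq0 : tvar != 0.
Proof. by rewrite /tvar tofrac_eq0 polyX_eq0. Qed.

Lemma tvar4 : tvar ^+ 4 - 1 != 0.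
Proof.
rewrite /tvar -tofracXn -tofrac1 -tofracB tofrac_eq0.
by rewrite -size_poly_eq0 -polyC1 size_XnsubC.
Qed.

Lemma part3 n :
   let t : ratfun := tvar in
   let s := - t ^+ 2 - (t ^+ 2)^-1 in
   t ^+ 2 / (t ^+ 4 - 1) *
     \sum_(i < n.+1) (t ^+ (2 * i) - (t ^+ (2 * i))^-1)
                     * (stern ratfun (n - i)).[s]
     = (if odd n then 0 else (stern ratfun n./2).[s]).
Proof.
move=> t s.
set y := t ^+ 2; set z := y^-1.
have t0 : t != 0 := tvar_neq0.
have y0 : y != 0 by rewrite /y expf_neq0.
have yz : y * z = 1 by rewrite /z mulfV.
have t4 : t ^+ 4 = y * y by rewrite /y -exprD.
have t40 : y * y - 1 != 0 by rewrite -t4; exact: tvar4.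
set K := y / (t ^+ 4 - 1).
pose f k := (stern ratfun k).[s].
pose V k := K * (y ^+ k - z ^+ k).
have hV : forall i : nat, t ^+ (2 * i) - (t ^+ (2 * i))^-1 = y ^+ i - z ^+ i.
  by move=> i; rewrite exprM -/y exprVn.
have -> : K * \sum_(i < n.+1) (t ^+ (2 * i) - (t ^+ (2 * i))^-1) * f (n - i)%N = conv V f n.
  rewrite big_distrr; apply: eq_bigr => i _; by rewrite /= hV mulrA.
rewrite convC.
have f0 : f 0%N = 0 by rewrite /f stern0 horner0.
have fe : forall a, f a.*2 = s * f a.
  by move=> a; rewrite /f stern_even hornerM hornerX.
have fo : forall a, f a.*2.+1 = f a + f a.+1.
  by move=> a; rewrite /f stern_odd hornerD.
have V0 : V 0%N = 0 by rewrite /V !expr0 subrr mulr0.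
have V1 : V 1%N = 1.
  by rewrite /V !expr1 /K t4 mulrAC mulrBr yz -expr2 expr2 divff.
have hs : - s = y + z by rewrite /s opprB opprK addrC.
have hVr : forall k, V k.+2 = - s * V k.+1 + (-1) * V k.
  move=> k; rewrite /V hs (w_rec _ y z k yz) mulrBr mulN1r.
  by rewrite [K * ((y + z) * _)]mulrCA.
have H := conv_V _ _ _ f0 fe fo _ V0 V1 hVr.
have := odd_double_half n; move: (odd n) (n./2) => b k <-.
case: b; rewrite ?add1n ?add0n /= ?odd_double /=.
  by case: (H k).
by case: (H k) => -> _; rewrite ?doubleK.
Qed.

Theorem theorem3p6 (n : nat) :
  [/\
   (* (i) in Q[t] *)
   \sum_(i < n.+1) stern rat i * (chebU rat (n - i) \Po (- (2^-1 : rat) *: 'X))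
     = (if odd n then stern rat (n.+1)./2 else 0),
   (* (ii) in Q[t] *)
   \sum_(i < n.+1) stern rat i * (stern rat (n - i) \Po (- 'X))
     = (if odd n then 0 else stern rat n./2 \Po (2%:P - 'X ^+ 2))
   &
   (* (iii) in the field of rational functions Q(t), t = X *)
   let t : ratfun := tvar in
   let s := - t ^+ 2 - (t ^+ 2)^-1 in
   t ^+ 2 / (t ^+ 4 - 1) *
     \sum_(i < n.+1) (t ^+ (2 * i) - (t ^+ (2 * i))^-1)
                     * (stern ratfun (n - i)).[s]
     = (if odd n then 0 else (stern ratfun n./2).[s])].
Proof.
split; [exact: part1 | exact: part2 | exact: part3].
Qed.
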